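(* Let $\alpha,\beta$ be $H$-colorings of $G$ and let $S=\sigma_0,\dots,\sigma_l$ be an $H$-recoloring sequence with $\sigma_0=\alpha$ and $\sigma_l=\beta$ whose length $l$ is minimum among all such sequences. Then for every vertex $v\in V(G)$, the walk $S(v)$ is reduced.
   Context: All graphs are finite and undirected. $G$ is a connected loopless graph with at least one edge. $H$ is a connected graph with at least one edge, possibly with loops, having the monochromatic neighborhood property: for all $a,b\in V(H)$, $|N_H(a)\cap N_H(b)|\le 1$, where $N_H(a)=\{w: aw\in E(H)\}$. An $H$-coloring of $G$ is a map $\sigma:V(G)\to V(H)$ such that $uv\in E(G)$ implies $\sigma(u)\sigma(v)\in E(H)$. An $H$-recoloring sequence is a sequence $\sigma_0,\dots,\sigma_l$ of $H$-colorings of $G$ in which consecutive colorings differ in the color of exactly one vertex; its length is $l$. An oriented edge is an ordered pair $(x,y)$ with $xy$ an edge; $(x,y)^{-1}=(y,x)$. A walk is a sequence of oriented edges, each starting where the previous ends; $\varepsilon$ is the empty walk. A walk is reduced if no two consecutive edges $e_ie_{i+1}$ satisfy $e_{i+1}=e_i^{-1}$. Vertex walks: in a one-step sequence $\sigma_0,\sigma_1$ where vertex $w$ changes from $a$ to $b\ne a$, all neighbors of $w$ have a common color $h$ (the unique element of $N_H(a)\cap N_H(b)$); set $S(w)=(a,h)(h,b)$ and $S(v)=\varepsilon$ for $v\ne w$. For the empty sequence $S(v)=\varepsilon$; for longer sequences $S(v)$ is the concatenation of the one-step walks in order. *)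

(* Defs.v *)
From mathcomp Require Import all_boot.
Set Implicit Arguments. Unset Strict Implicit. Unset Printing Implicit Defensive.

(* G : vertex type V (finType) with symmetric irreflexive edge relation eG.
   H : vertex type W (finType) with symmetric edge relation eH (loops allowed). *)

Definition connected_rel (T : finType) (e : rel T) : Prop :=
  forall x y : T, connect e x y.

Definition has_edge (T : finType) (e : rel T) : Prop :=
  exists x y : T, e x y.

Definition mono_nbhd (W : finType) (eH : rel W) : Prop :=
  forall a b : W, a != b -> #|[set w | eH a w & eH b w]| <= 1.

Definition Hcoloring (V W : finType) (eG : rel V) (eH : rel W)
  (sigma : {ffun V -> W}) : Prop :=
  forall u v : V, eG u v -> eH (sigma u) (sigma v).

Definition one_step (V W : finType) (s0 s1 : {ffun V -> W}) : Prop :=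
  exists w : V, s0 w != s1 w /\ forall v : V, v != w -> s0 v = s1 v.

(* An H-recoloring sequence sigma_0 = s0, sigma_1, ..., sigma_l given as s0 :: rest;
   its length is size rest. *)
Fixpoint recoloring_seq (V W : finType) (eG : rel V) (eH : rel W)
  (s0 : {ffun V -> W}) (rest : seq {ffun V -> W}) : Prop :=
  match rest with
  | [::] => Hcoloring eG eH s0
  | s1 :: r => Hcoloring eG eH s0 /\ one_step s0 s1 /\ recoloring_seq eG eH s1 r
  end.

Definition oedge (W : Type) := (W * W)%type.
Definition walk (W : Type) := seq (oedge W).
Definition oinv (W : Type) (e : oedge W) : oedge W := (e.2, e.1).

Definition reduced (W : Type) (p : walk W) : Prop :=
  forall (e0 : oedge W) (i : nat), i.+1 < size p ->
    nth e0 p i.+1 <> oinv (nth e0 p i).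

(* the one-step walk of v: if v changes from a to b, (a,h)(h,b) where h is the
   unique element of N_H(a) ∩ N_H(b); otherwise the empty walk *)
Definition step_walk (V W : finType) (eH : rel W) (v : V)
  (s0 s1 : {ffun V -> W}) : walk W :=
  let a := s0 v in let b := s1 v in
  if a != b then
    match [pick h | eH a h && eH b h] with
    | Some h => [:: (a, h); (h, b)]
    | None => [::]
    end
  else [::].

Fixpoint Swalk (V W : finType) (eH : rel W) (v : V)
  (s0 : {ffun V -> W}) (rest : seq {ffun V -> W}) : walk W :=
  match rest with
  | [::] => [::]
  | s1 :: r => step_walk eH v s0 s1 ++ Swalk eH v s1 r
  end.

(* Main.v *)
Require Import Defs.
From mathcomp Require Import all_boot.
From Stdlib Require Import Classical.
From mathcomp Require Import zify.
Set Implicit Arguments. Unset Strict Implicit.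

Section S.
Variables (V W : finType) (eG : rel V) (eH : rel W).
Hypotheses (eG_sym : symmetric eG) (eG_irr : irreflexive eG)
  (eH_sym : symmetric eH) (H_mono : mono_nbhd eH).

Lemma common_uniq a b x y : a != b -> eH a x -> eH b x -> eH a y -> eH b y -> x = y.
Proof.
move=> ab ax bx ay by_.
have /card_le1_eqP := H_mono ab; apply; by rewrite inE ?ax ?bx ?ay ?by_.
Qed.

Lemma only_change (s0 s1 : {ffun V -> W}) x : one_step s0 s1 -> s0 x != s1 x ->
  forall y, y != x -> s0 y = s1 y.
Proof.
case=> z [hz oth] hx y yx.
have zx : z = x.
  apply/eqP; apply/negPn/negP => zx; move/eqP: hx; apply; apply: oth; by rewrite eq_sym.
subst z; exact: oth.
Qed.

Lemma neq_of_edge x y : eG x y -> y != x.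
Proof. by move=> e; apply/eqP => yx; subst; rewrite eG_irr in e. Qed.

Lemma step_common (s0 s1 : {ffun V -> W}) u w w' :
  Hcoloring eG eH s0 -> Hcoloring eG eH s1 -> one_step s0 s1 -> s0 u != s1 u ->
  eG u w -> eG u w' -> s0 w = s0 w'.
Proof.
move=> H0 H1 os ch ew ew'.
have e1 := only_change os ch (neq_of_edge ew).
have e2 := only_change os ch (neq_of_edge ew').
apply: (common_uniq ch).
- exact: H0.
- rewrite e1; exact: H1.
- exact: H0.
- rewrite e2; exact: H1.
Qed.

Definition Fs (s0 : {ffun V -> W}) r t := nth (last s0 r) (s0 :: r) t.

Definition valid (f : nat -> {ffun V -> W}) l :=
  (forall t, t <= l -> Hcoloring eG eH (f t)) /\
  (forall t, t < l -> one_step (f t) (f t.+1)).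

Lemma recseq_valid s0 r : recoloring_seq eG eH s0 r -> valid (Fs s0 r) (size r).
Proof.
elim: r s0 => [|s1 r IH] s0 /=.
  move=> H; split=> // t; rewrite leqn0 => /eqP ->; done.
move=> [H0 [os Hr]]; have [IH1 IH2] := IH _ Hr; split.
  case=> [|t] /= ht; first done.
  exact: (IH1 t).
case=> [|t] /= ht; first done.
exact: (IH2 t).
Qed.

Definition bad (f : nat -> {ffun V -> W}) l v i j :=
  [/\ i < j, j < l, f i v != f i.+1 v, f j v != f j.+1 v &
   (forall t, i < t -> t < j -> f t v = f t.+1 v) /\
   (forall u, eG v u -> f i u = f j u)].


Lemma compress l : forall g : nat -> {ffun V -> W},
  (forall t, t <= l -> Hcoloring eG eH (g t)) ->
  (forall t, t < l -> g t = g t.+1 \/ one_step (g t) (g t.+1)) ->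
  exists r', [/\ recoloring_seq eG eH (g 0) r', last (g 0) r' = g l, size r' <= l &
    ((exists k, k < l /\ g k = g k.+1) -> size r' < l)].
Proof.
elim: l => [|l IH] g Hc Hs.
  exists [::]; split => //; first exact: Hc.
  by case=> k [].
have [r' [R1 R2 R3 R4]] := IH (fun t => g t.+1) (fun t ht => Hc t.+1 ht)
   (fun t ht => Hs t.+1 ht).
case: (Hs 0 isT) => [E|os].
  exists r'; rewrite E; split => //; try by apply: leqW.
exists (g 1 :: r'); split => //=.
  split; first exact: Hc.
  by split.
case=> [[|k]] [hk E].
  by case: os => w [hw _]; rewrite E eqxx in hw.
by rewrite ltnS; apply: R4; exists k.
Qed.

Lemma const_range (T : Type) (f : nat -> T) p q :
  (forall t, p <= t -> t < q -> f t = f t.+1) -> forall t, p <= t -> t <= q -> f t = f p.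
Proof.
move=> H; elim=> [|t IH] hp hq.
  by move: hp; rewrite leqn0 => /eqP ->.
case: (ltngtP p t.+1) => [hlt|hgt|->] //.
  by rewrite -H ?IH // ltnW.
by rewrite ltnNge hp in hgt.
Qed.

Lemma first_change (T : eqType) (f : nat -> T) p q :
  (exists t, [/\ p <= t, t < q & f t != f t.+1]) ->
  exists t1, [/\ p <= t1, t1 < q, f t1 != f t1.+1 &
    forall t, p <= t -> t < t1 -> f t = f t.+1].
Proof.
move=> [t0 [h1 h2 h3]].
have ex : exists n, [&& p <= n, n < q & f n != f n.+1].
  by exists t0; rewrite h1 h2 h3.
case: (ex_minnP ex) => m /and3P [m1 m2 m3] mmin.
exists m; split => // t ht1 ht2.
apply/eqP; apply/negPn/negP => ch.
have := mmin t; rewrite ht1 ch (ltn_trans ht2 m2) => /(_ isT).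
by rewrite leqNgt ht2.
Qed.

Lemma two_changes (T : eqType) (f : nat -> T) p q t0 :
  f p = f q -> p <= t0 -> t0 < q -> f t0 != f t0.+1 ->
  exists t1 t2, [/\ p <= t1, t1 < t2, t2 < q, f t1 != f t1.+1 &
     f t2 != f t2.+1 /\ forall t, t1 < t -> t < t2 -> f t = f t.+1].
Proof.
move=> Epq h1 h2 h3.
have [t1 [a1 a2 a3 a4]] := first_change (ex_intro _ t0 (And3 h1 h2 h3)).
have Ft1 : f t1 = f p by apply: (const_range a4) => //; apply: leqnn.
case: (classic (exists t, [/\ t1.+1 <= t, t < q & f t != f t.+1])) => [ex|nex].
  have [t2 [b1 b2 b3 b4]] := first_change ex.
  exists t1, t2; split => //.
case/negP: a3; rewrite Ft1 Epq.
have HH : forall t, t1.+1 <= t -> t < q -> f t = f t.+1.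
  move=> t ht1 ht2; apply/eqP; apply/negPn/negP => ch.
  by apply: nex; exists t.
by rewrite (@const_range _ f t1.+1 q HH q) // ltnW.
Qed.


Lemma step_walk_change (s0 s1 : {ffun V -> W}) v u :
  Hcoloring eG eH s0 -> Hcoloring eG eH s1 -> one_step s0 s1 -> s0 v != s1 v ->
  eG v u -> step_walk eH v s0 s1 = [:: (s0 v, s0 u); (s0 u, s1 v)].
Proof.
move=> H0 H1 os ch e.
have E := only_change os ch (neq_of_edge e).
have a1 : eH (s0 v) (s0 u) by exact: H0.
have a2 : eH (s1 v) (s0 u) by rewrite E; exact: H1.
rewrite /step_walk ch; case: pickP => [h /andP [h1 h2] | none].
  by rewrite (common_uniq ch h1 h2 a1 a2).
by have := none (s0 u); rewrite a1 a2.
Qed.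

Lemma step_walk_same (s0 s1 : {ffun V -> W}) v :
  s0 v = s1 v -> step_walk eH v s0 s1 = [::].
Proof. by move=> E; rewrite /step_walk E eqxx. Qed.

Lemma valid_tail s0 s1 r : valid (Fs s0 (s1 :: r)) (size r).+1 -> valid (Fs s1 r) (size r).
Proof. move=> [A B]; split => t ht; [exact: (A t.+1 ht) | exact: (B t.+1 ht)]. Qed.

Lemma head_walk v nb (enb : eG v nb) r : forall s0 e ys,
  valid (Fs s0 r) (size r) -> Swalk eH v s0 r = e :: ys ->
  exists j, [/\ j < size r, (forall t, t < j -> Fs s0 r t v = Fs s0 r t.+1 v),
     Fs s0 r j v != Fs s0 r j.+1 v, e.1 = Fs s0 r j v &
     forall u, eG v u -> Fs s0 r j u = e.2].
Proof.
elim: r => [|s1 r IH] s0 e ys //= Hv.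
have [A B] := Hv.
have H0 : Hcoloring eG eH s0 := A 0 isT.
have H1 : Hcoloring eG eH s1 := A 1 isT.
have os : one_step s0 s1 := B 0 isT.
case: (boolP (s0 v != s1 v)) => ch.
  rewrite (step_walk_change H0 H1 os ch enb) /= => [[<- _]].
  exists 0; split => //= u eu.
  exact: (step_common H0 H1 os ch eu enb).
move/negPn/eqP: ch => ch.
rewrite (step_walk_same ch) cat0s => E.
have [j [j1 j2 j3 j4 j5]] := IH s1 e ys (valid_tail Hv) E.
exists j.+1; split => //.
by case=> [|t] //= ht; apply: j2.
Qed.

Lemma reduced_cons2 (a h b : W) y : a != b -> reduced y ->
  (forall e ys, y = e :: ys -> e <> (b, h)) -> reduced ((a, h) :: (h, b) :: y).
Proof.
move=> ab Ry Hy e0 [|[|i]] /= hi.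
- by rewrite /oinv /= => [[E]]; rewrite E eqxx in ab.
- case: y Ry Hy hi => [|e ys] //= Ry Hy _.
  exact: Hy.
- exact: Ry.
Qed.

Lemma bad_shift s0 s1 r v i j :
  bad (Fs s1 r) (size r) v i j -> bad (Fs s0 (s1 :: r)) (size r).+1 v i.+1 j.+1.
Proof.
case=> h1 h2 h3 h4 [h5 h6]; split => //.
split; last exact: h6.
by case=> [|t] //= ht1 ht2; apply: h5.
Qed.

Lemma extract v nb (enb : eG v nb) r : forall s0,
  valid (Fs s0 r) (size r) ->
  reduced (Swalk eH v s0 r) \/ exists i j, bad (Fs s0 r) (size r) v i j.
Proof.
elim: r => [|s1 r IH] s0 Hv.
  by left => e0 i.
have [A B] := Hv.
have H0 : Hcoloring eG eH s0 := A 0 isT.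
have H1 : Hcoloring eG eH s1 := A 1 isT.
have os : one_step s0 s1 := B 0 isT.
case: (IH s1 (valid_tail Hv)) => [Rt | [i [j bij]]]; last first.
  right; exists i.+1, j.+1; exact: (bad_shift s0 bij).
case: (boolP (s0 v != s1 v)) => ch; last first.
  move/negPn/eqP: ch => ch.
  by left; rewrite /= (step_walk_same ch) cat0s.
rewrite /= (step_walk_change H0 H1 os ch enb) /=.
case: (classic (exists ys, Swalk eH v s1 r = (s1 v, s0 nb) :: ys)) => [[ys E]|nE].
  have [j [j1 j2 j3 j4 j5]] := head_walk enb (valid_tail Hv) E.
  right; exists 0, j.+1; split => //=.
  split.
    by case=> [|t] // _ ht; apply: j2.
  move=> u eu; rewrite j5 //=.
  exact: (step_common H0 H1 os ch eu enb).
left; apply: reduced_cons2 => // e ys E Ee; apply: nE; exists ys; by rewrite E Ee.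
Qed.


Lemma shorten f l n : valid f l -> forall v i j, bad f l v i j -> j - i <= n ->
  exists r', [/\ recoloring_seq eG eH (f 0) r', last (f 0) r' = f l & size r' < l].
Proof.
move=> [A B]; elim: n => [|n IH] v i j [h1 h2 h3 h4 [h5 h6]] hn.
  by move: hn; rewrite leqn0 subn_eq0 leqNgt h1.
have il : i < l by apply: ltn_trans h2.
have osi := B i il.
have Hvc : forall t, i.+1 <= t -> t <= j -> f t v = f i.+1 v.
  by apply: const_range => t ht1 ht2; apply: h5.
case: (classic (exists u t, [/\ eG v u, i < t, t < j & f t u != f t.+1 u])).
  move=> [u [t0 [eu t01 t02 t03]]].
  have Eu : f i u = f i.+1 u := only_change osi h3 (neq_of_edge eu).
  have Fq : f i.+1 u = f j u by rewrite -Eu; exact: h6.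
  have [t1 [t2 [a1 a2 a3 a4 [a5 a6]]]] :=
    @two_changes _ (fun t => f t u) i.+1 j t0 Fq t01 t02 t03.
  have t2l : t2 < l by apply: ltn_trans h2.
  have t1l : t1 < l by apply: ltn_trans t2l.
  have evu : eG u v by rewrite eG_sym.
  apply: (IH u t1 t2); last by lia.
  split => //; split => // w ew.
  rewrite (step_common (A t1 (ltnW t1l)) (A t1.+1 t1l) (B t1 t1l) a4 ew evu).
  rewrite (step_common (A t2 (ltnW t2l)) (A t2.+1 t2l) (B t2 t2l) a5 ew evu).
  rewrite !Hvc //; try lia.
move=> nex.
have nch : forall u t, eG v u -> i < t -> t < j -> f t u = f t.+1 u.
  move=> u t eu t1 t2; apply/eqP; apply/negPn/negP => ch; apply: nex.
  by exists u, t.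
have nbc : forall u, eG v u -> forall t, i <= t -> t <= j -> f t u = f i u.
  move=> u eu; apply: const_range => t t1 t2.
  case: (eqVneq t i) => [->|ti].
    exact: (only_change osi h3 (neq_of_edge eu)).
  by apply: nch => //; rewrite ltn_neqAle eq_sym ti.
pose g t := if (i < t) && (t <= j) then [ffun x => if x == v then f i v else f t x]
            else f t.
have gin : forall t, i < t -> t <= j -> g t = [ffun x => if x == v then f i v else f t x].
  by move=> t t1 t2; rewrite /g t1 t2.
have gout : forall t, ~~ ((i < t) && (t <= j)) -> g t = f t.
  by move=> t ht; rewrite /g (negbTE ht).
have gi : g i = g i.+1.
  rewrite (gin i.+1) // (gout i) ?ltnn //.
  apply/ffunP => x; rewrite ffunE; case: eqVneq => [->|xv] //.
  exact: (only_change osi h3 xv).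
have Hg1 : forall t, t <= l -> Hcoloring eG eH (g t).
  move=> t tl; case: (boolP ((i < t) && (t <= j))) => [/andP [t1 t2]|hout];
    last by rewrite gout //; apply: A.
  rewrite gin // => x y exy; rewrite !ffunE.
  case: (eqVneq x v) => [xv|xv]; case: (eqVneq y v) => [yv|yv].
  + by subst; rewrite eG_irr in exy.
  + subst x; rewrite nbc //; last exact: ltnW.
    exact: (A i (ltnW il)).
  + subst y; have evx : eG v x by rewrite eG_sym.
    rewrite nbc //; last exact: ltnW.
    exact: (A i (ltnW il)).
  + exact: A.
have Hg2 : forall t, t < l -> g t = g t.+1 \/ one_step (g t) (g t.+1).
  move=> t tl; case: (ltnP t i) => [tlt|tge].
    right; rewrite !gout; first exact: B.
    + by apply/negP => /andP [? ?]; lia.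
    + by apply/negP => /andP [? ?]; lia.
  case: (eqVneq t i) => [-> | tne]; first by left.
  have ti : i < t by rewrite ltn_neqAle eq_sym tne.
  case: (ltnP t j) => [tj|tj].
    right; rewrite !gin //; last exact: ltnW.
    have [w [hw oth]] := B t tl.
    have wv : w != v.
      by apply/eqP => wv; subst w; rewrite h5 ?eqxx in hw.
    exists w; rewrite !ffunE (negbTE wv); split => // y yw.
    rewrite !ffunE; case: eqVneq => // _; exact: oth.
  case: (eqVneq t j) => [->|tnj].
    rewrite gin // gout; last by rewrite negb_and ltnn orbT.
    case: (eqVneq (f i v) (f j.+1 v)) => [E|nE].
      left; apply/ffunP => x; rewrite ffunE; case: eqVneq => [->|xv] //.
      exact: (only_change (B j h2) h4 xv).
    right; exists v; rewrite ffunE eqxx; split => // y yv.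
    rewrite ffunE (negbTE yv); exact: (only_change (B j h2) h4 yv).
  have jt : j < t by rewrite ltn_neqAle eq_sym tnj.
  right; rewrite !gout; first exact: B.
  + by apply/negP => /andP [? ?]; lia.
  + by apply/negP => /andP [? ?]; lia.
have [r' [R1 R2 R3 R4]] := compress Hg1 Hg2.
have g0 : g 0 = f 0 by rewrite gout.
have gl : g l = f l by rewrite gout //; apply/negP => /andP [? ?]; lia.
exists r'; split; first by rewrite -g0.
  by rewrite -g0 R2 gl.
by apply: R4; exists i.
Qed.

End S.

Lemma has_nb (V : finType) (eG : rel V) : connected_rel eG -> has_edge eG ->
  forall v, exists u, eG v u.
Proof.
move=> Gc [x [y exy]] v.
case/connectP: (Gc v x) => [[|z p]] /= pth E.
  by exists y; rewrite -E.
by exists z; case/andP: pth.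
Qed.

Theorem mainTheorem7 (V W : finType) (eG : rel V) (eH : rel W)
  (eG_sym : symmetric eG) (eG_irr : irreflexive eG)
  (G_conn : connected_rel eG) (G_edge : has_edge eG)
  (eH_sym : symmetric eH) (H_conn : connected_rel eH) (H_edge : has_edge eH)
  (H_mono : mono_nbhd eH)
  (alpha beta : {ffun V -> W}) (rest : seq {ffun V -> W})
  (Hseq : recoloring_seq eG eH alpha rest)
  (Hend : last alpha rest = beta)
  (Hmin : forall rest' : seq {ffun V -> W},
      recoloring_seq eG eH alpha rest' -> last alpha rest' = beta ->
      size rest <= size rest') :
  forall v : V, reduced (Swalk eH v alpha rest).
Proof.
move=> v; have [nb enb] := has_nb G_conn G_edge v.
have Hv := recseq_valid Hseq.
case: (extract eG_irr H_mono enb Hv) => // [[i [j b]]].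
have [r' [R1 R2 R3]] := shorten eG_sym eG_irr H_mono Hv b (leqnn _).
have F0 : Fs alpha rest 0 = alpha by [].
have Fl : Fs alpha rest (size rest) = last alpha rest.
  by rewrite /Fs -last_nth.
rewrite F0 Fl Hend in R1 R2.
have := Hmin r' R1 R2.
by rewrite leqNgt R3.
Qed.
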